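(* Let $A$ be a vertex of a cube $\mathcal C$ and let $S$ be the union of the three faces of $\mathcal C$ not containing $A$. If $f\colon\mathcal C\to\mathbb{R}$ is convex, then $$\operatorname{Avg}(f,\mathcal C)\le\frac14f(A)+\frac34\operatorname{Avg}(f,S),\qquad \operatorname{Avg}(f,h_A^{3/4}(S))\le\operatorname{Avg}(f,\mathcal C).$$
   Context: $\operatorname{Avg}(f,\mathcal C)$ is the average over the cube with respect to volume; averages over $S$ and $h_A^{3/4}(S)$ are with respect to surface area. $h_A^\lambda(\mathbf x)=A+\lambda(\mathbf x-A)$ is the homothety with center $A$ and ratio $\lambda$. *)

(* Defs.v *)
From Stdlib Require Import Reals.
From Coquelicot Require Import Coquelicot.
Open Scope R_scope.

Record pt3 := P3 { px : R ; py : R ; pz : R }.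

Definition padd (x y : pt3) : pt3 := P3 (px x + px y) (py x + py y) (pz x + pz y).
Definition psub (x y : pt3) : pt3 := P3 (px x - px y) (py x - py y) (pz x - pz y).
Definition pscal (c : R) (x : pt3) : pt3 := P3 (c * px x) (c * py x) (c * pz x).
Definition pdot (x y : pt3) : R := px x * px y + py x * py y + pz x * pz y.

Definition orthonormal (u v w : pt3) : Prop :=
  pdot u u = 1 /\ pdot v v = 1 /\ pdot w w = 1 /\
  pdot u v = 0 /\ pdot u w = 0 /\ pdot v w = 0.

(* The cube with vertex A, side a > 0 and edge directions u, v, w (orthonormal):
   C = { A + a s u + a t v + a r w : s, t, r in [0,1] }.
   Every cube in R^3, with any chosen vertex A, is of this form. *)
Definition cube_pt (A : pt3) (a : R) (u v w : pt3) (s t r : R) : pt3 :=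
  padd A (padd (pscal (a * s) u) (padd (pscal (a * t) v) (pscal (a * r) w))).

Definition in_cube (A : pt3) (a : R) (u v w : pt3) (x : pt3) : Prop :=
  exists s t r, 0 <= s <= 1 /\ 0 <= t <= 1 /\ 0 <= r <= 1 /\ x = cube_pt A a u v w s t r.

Definition convex_on_cube (A : pt3) (a : R) (u v w : pt3) (f : pt3 -> R) : Prop :=
  forall x y l, in_cube A a u v w x -> in_cube A a u v w y -> 0 <= l <= 1 ->
    f (padd (pscal l x) (pscal (1 - l) y)) <= l * f x + (1 - l) * f y.

Definition homothety (A : pt3) (lam : R) (x : pt3) : pt3 :=
  padd A (pscal lam (psub x A)).

(* Volume average over the cube: (1/vol C) * \int_C f, written through the
   affine parametrization [0,1]^3 -> C (constant Jacobian a^3 = vol C). *)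
Definition avg_cube (A : pt3) (a : R) (u v w : pt3) (f : pt3 -> R) : R :=
  RInt (fun s => RInt (fun t => RInt (fun r => f (cube_pt A a u v w s t r)) 0 1) 0 1) 0 1.

(* Surface average over S, the union of the three faces not containing A
   (faces s = 1, t = 1, r = 1), each of area a^2, pairwise overlapping only in
   edges (area 0): Avg(g,S) = (1/3) * sum of the three face averages. *)
Definition avg_S (A : pt3) (a : R) (u v w : pt3) (g : pt3 -> R) : R :=
  / 3 * ( RInt (fun t => RInt (fun r => g (cube_pt A a u v w 1 t r)) 0 1) 0 1
        + RInt (fun s => RInt (fun r => g (cube_pt A a u v w s 1 r)) 0 1) 0 1
        + RInt (fun s => RInt (fun t => g (cube_pt A a u v w s t 1)) 0 1) 0 1 ).

(* Surface average over h_A^lambda(S): h_A^lambda scales surface area by the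
   constant factor lambda^2, so Avg(f, h_A^lambda(S)) = Avg(f o h_A^lambda, S). *)
Definition avg_hS (A : pt3) (a : R) (u v w : pt3) (lam : R) (f : pt3 -> R) : R :=
  avg_S A a u v w (fun x => f (homothety A lam x)).

(* Main.v *)
Require Import Defs.
From Stdlib Require Import Reals Lra Psatz Classical FunctionalExtensionality ZArith Lia.
From Coquelicot Require Import Coquelicot.
Open Scope R_scope.


Lemma scalR (a b : R) : scal a b = a * b.
Proof. reflexivity. Qed.
Lemma minusR (a b : R) : minus a b = a - b.
Proof. reflexivity. Qed.
Lemma plusR (a b : R) : plus a b = a + b.
Proof. reflexivity. Qed.

Definition conv1 (phi : R -> R) := forall x y l, 0 <= x <= 1 -> 0 <= y <= 1 -> 0 <= l <= 1 ->
  phi (l*x+(1-l)*y) <= l * phi x + (1-l) * phi y.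
Definition bnd1 (phi : R -> R) M := forall x, 0 <= x <= 1 -> Rabs (phi x) <= M.

Lemma K3 phi x y z : conv1 phi -> 0 <= x -> x < y -> y < z -> z <= 1 ->
  (z-x) * phi y <= (z-y) * phi x + (y-x) * phi z.
Proof.
  intros Hc H1 H2 H3 H4.
  pose proof (Hc x z ((z-y)/(z-x))) as H.
  replace ((z - y) / (z - x) * x + (1 - (z - y) / (z - x)) * z) with y in H by (field; lra).
  assert (0 <= (z-y)/(z-x) <= 1).
  { split. apply Rdiv_le_0_compat; lra. apply Rmult_le_reg_r with (z-x). lra.
    unfold Rdiv; rewrite Rmult_assoc, Rinv_l; lra. }
  specialize (H ltac:(lra) ltac:(lra) H0).
  apply Rmult_le_compat_l with (r := z-x) in H; [|lra].
  replace ((z - y) * phi x + (y - x) * phi z) with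
    ((z - x) * ((z - y) / (z - x) * phi x + (1 - (z - y) / (z - x)) * phi z)) by (field; lra).
  exact H.
Qed.

Lemma absle a b : Rabs a <= b -> -b <= a <= b.
Proof. intros H. unfold Rabs in H. destruct (Rcase_abs a); lra. Qed.

Definition LL M a b := 2*M*(/a + /(1-b)).

Lemma lip1 phi M a b x y : conv1 phi -> bnd1 phi M -> 0 < a -> b < 1 ->
  a <= x -> x <= y -> y <= b -> Rabs (phi y - phi x) <= LL M a b * (y - x).
Proof.
  intros Hc Hb Ha Hb1 H1 H2 H3.
  unfold LL.
  destruct (Req_dec x y) as [->|Hne].
  { replace (phi y - phi y) with 0 by ring. rewrite Rabs_R0. lra. }
  assert (Hxy : x < y) by lra.
  assert (HM : 0 <= M) by (pose proof (Hb 0 ltac:(lra)); pose proof (Rabs_pos (phi 0)); lra).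
  pose proof (Hb x ltac:(lra)) as Bx. pose proof (Hb 0 ltac:(lra)) as B0.
  pose proof (Hb 1 ltac:(lra)) as B1.
  apply absle in Bx. apply absle in B0. apply absle in B1.
  pose proof (K3 phi x y 1 Hc ltac:(lra) Hxy ltac:(lra) ltac:(lra)) as U.
  pose proof (K3 phi 0 x y Hc ltac:(lra) ltac:(lra) Hxy ltac:(lra)) as Lw.
  assert (ia : 0 < /a) by (apply Rinv_0_lt_compat; lra).
  assert (ib : 0 < /(1-b)) by (apply Rinv_0_lt_compat; lra).
  assert (ea : /a * a = 1) by (field; lra).
  assert (eb : /(1-b) * (1-b) = 1) by (field; lra).
  apply Rabs_le. split.
  -
    assert (0 <= (y-x)*(phi x - phi 0 + 2*M)) by (apply Rmult_le_pos; lra).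
    assert (x * (phi y - phi x) >= -((y-x)*(2*M))) by nra.
    assert (a * (phi y - phi x) >= -((y-x)*(2*M))).
    { destruct (Rle_dec 0 (phi y - phi x)); nra. }
    assert (phi y - phi x >= - (/a * ((y-x)*(2*M)))).
    { replace (phi y - phi x) with (/a * (a * (phi y - phi x))) by (field; lra).
      rewrite Ropp_mult_distr_r. apply Rmult_ge_compat_l; lra. }
    assert (0 <= /(1-b) * ((y-x)*(2*M))) by (apply Rmult_le_pos; [lra| apply Rmult_le_pos; lra]).
    nra.
  - assert (0 <= (y-x)*(2*M - (phi 1 - phi x))) by (apply Rmult_le_pos; lra).
    assert ((1-x) * (phi y - phi x) <= (y-x)*(2*M)) by nra.
    assert ((1-b) * (phi y - phi x) <= (y-x)*(2*M)).
    { destruct (Rle_dec 0 (phi y - phi x)); nra. }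
    assert (phi y - phi x <= /(1-b) * ((y-x)*(2*M))).
    { replace (phi y - phi x) with (/(1-b) * ((1-b) * (phi y - phi x))) by (field; lra).
      apply Rmult_le_compat_l; lra. }
    assert (0 <= /a * ((y-x)*(2*M))) by (apply Rmult_le_pos; [lra| apply Rmult_le_pos; lra]).
    nra.
Qed.

Lemma lim0 phi M : conv1 phi -> bnd1 phi M ->
  exists L0, forall eps, 0 < eps -> exists del, 0 < del /\
    forall x, 0 < x < del -> Rabs (phi x - L0) < eps.
Proof.
  intros Hc Hb.
  set (c := /2).
  set (m := fun x => (phi c - phi x) * /(c - x)).
  assert (mono : forall x y, 0 <= x -> x < y -> y < c -> m x <= m y).
  { intros x y H1 H2 H3. unfold m.
    pose proof (K3 phi x y c Hc H1 H2 H3 ltac:(unfold c; lra)) as K.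
    assert (i1 : /(c-x) * (c-x) = 1) by (field; lra).
    assert (i2 : /(c-y) * (c-y) = 1) by (field; lra).
    assert (0 < /(c-x)) by (apply Rinv_0_lt_compat; lra).
    assert (0 < /(c-y)) by (apply Rinv_0_lt_compat; lra).
    assert ((phi c - phi x) * (c-y) <= (phi c - phi y) * (c-x)) by nra.
    assert (0 < /(c-x) * /(c-y)) by (apply Rmult_lt_0_compat; lra).
    apply Rmult_le_compat_l with (r := /(c-x) * /(c-y)) in H4; [|lra].
    replace ((phi c - phi x) * / (c - x)) with (/ (c - x) * / (c - y) * ((phi c - phi x) * (c - y))) by (field; lra).
    replace ((phi c - phi y) * / (c - y)) with (/ (c - x) * / (c - y) * ((phi c - phi y) * (c - x))) by (field; lra).
    exact H4. }
  set (E := fun v => exists x, 0 < x < c /\ v = - m x).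
  assert (bE : bound E).
  { exists (- m 0). intros v [x [Hx ->]]. pose proof (mono 0 x ltac:(lra) ltac:(lra) ltac:(lra)). lra. }
  assert (nE : exists v, E v) by (exists (- m (c/2)); exists (c/2); split; [unfold c; lra|reflexivity]).
  destruct (completeness E bE nE) as [g [Hg1 Hg2]].
  exists (phi c - c * (-g)).
  intros eps Heps.
  set (l := -g).
  assert (lo : forall x, 0 < x < c -> l <= m x).
  { intros x Hx. unfold l. assert (E (- m x)) by (exists x; split; [lra|reflexivity]).
    pose proof (Hg1 _ H). lra. }
  set (e1 := Rmin (eps/2) 1).
  assert (He1 : 0 < e1) by (unfold e1; apply Rmin_glb_lt; lra).
  assert (ex : exists x0, 0 < x0 < c /\ m x0 < l + e1).
  { destruct (Rlt_dec (-(l+e1)) g) as [Hlt|Hge].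
    -
      apply NNPP. intros Hn.
      assert (is_upper_bound E (-(l+e1))).
      { intros v [x [Hx ->]]. destruct (Rle_dec (- m x) (-(l+e1))) as [?|Hn2]; [assumption|].
        exfalso. apply Hn. exists x. split; [assumption|lra]. }
      pose proof (Hg2 _ H). unfold l in *. lra.
    - unfold l in *. lra. }
  destruct ex as [x0 [Hx0 Hm0]].
  set (K := Rabs l + 1).
  assert (HK : 0 < K) by (unfold K; pose proof (Rabs_pos l); lra).
  exists (Rmin x0 (eps / (4*K))).
  split. { apply Rmin_glb_lt; [lra|]. apply Rdiv_lt_0_compat; lra. }
  intros x [Hx1 Hx2].
  assert (Hxx0 : x < x0) by (eapply Rlt_le_trans; [exact Hx2|apply Rmin_l]).
  assert (Hxe : x < eps/(4*K)) by (eapply Rlt_le_trans; [exact Hx2|apply Rmin_r]).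
  assert (mx1 : l <= m x) by (apply lo; lra).
  assert (mx2 : m x <= m x0) by (apply mono; lra).
  assert (e1le : e1 <= eps/2) by apply Rmin_l.
  assert (e1le1 : e1 <= 1) by apply Rmin_r.
  assert (phx : phi x = phi c - (c - x) * m x).
  { assert (x < c) by lra. unfold m. field. lra. }
  rewrite phx.
  replace (phi c - (c - x) * m x - (phi c - c * - g)) with (c * (l - m x) + x * m x) by (unfold l; ring).
  assert (Rabs (m x) <= K).
  { unfold K. apply Rabs_le. destruct (Rle_dec 0 l);
    [rewrite Rabs_right by lra | rewrite Rabs_left by lra]; split; lra. }
  apply absle in H.
  assert (x * K < eps / 4).
  { replace (eps/4) with (eps/(4*K) * K) by (field; lra). apply Rmult_lt_compat_r; lra. }
  assert (0 <= x*(K - m x)) by (apply Rmult_le_pos; lra).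
  assert (0 <= x*(K + m x)) by (apply Rmult_le_pos; lra).
  assert (- (x*K) <= x * m x <= x*K) by (split; lra).
  assert (Hc4 : Rabs (c * (l - m x)) <= eps / 4).
  { rewrite Rabs_mult. unfold c. rewrite Rabs_right by lra.
    rewrite Rabs_left1 by lra. lra. }
  apply absle in Hc4. apply Rabs_def1; lra.
Qed.

Lemma conv1_refl phi : conv1 phi -> conv1 (fun x => phi (1 - x)).
Proof.
  intros Hc x y l Hx Hy Hl. simpl.
  replace (1 - (l*x+(1-l)*y)) with (l*(1-x)+(1-l)*(1-y)) by ring.
  apply Hc; lra.
Qed.

Lemma bnd1_refl phi M : bnd1 phi M -> bnd1 (fun x => phi (1 - x)) M.
Proof. intros Hb x Hx. apply Hb. lra. Qed.

Lemma conv_ex01 phi M : conv1 phi -> bnd1 phi M -> ex_RInt phi 0 1.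
Proof.
  intros Hc Hb.
  destruct (lim0 phi M Hc Hb) as [L0 HL0].
  destruct (lim0 _ M (conv1_refl phi Hc) (bnd1_refl phi M Hb)) as [L1 HL1].
  set (psi := fun x => if Rle_dec x 0 then L0 else if Rle_dec 1 x then L1 else phi x).
  apply ex_RInt_ext with psi.
  { intros x Hx. rewrite Rmin_left in Hx by lra. rewrite Rmax_right in Hx by lra.
    unfold psi. destruct (Rle_dec x 0); [lra|]. destruct (Rle_dec 1 x); [lra|]. reflexivity. }
  apply (@ex_RInt_continuous R_CompleteNormedModule).
  intros z Hz. rewrite Rmin_left in Hz by lra. rewrite Rmax_right in Hz by lra.
  apply continuity_pt_filterlim.
  unfold continuity_pt, continue_in, limit1_in, limit_in. simpl. unfold R_dist.
  intros eps Heps.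
  destruct (Req_dec z 0) as [->|Hz0].
  - destruct (HL0 eps Heps) as [d [Hd Hd2]].
    exists (Rmin d (1/2)). split. { apply Rmin_glb_lt; lra. }
    intros x [_ Hx]. rewrite Rminus_0_r in Hx.
    assert (Hxd : Rabs x < d) by (eapply Rlt_le_trans; [exact Hx|apply Rmin_l]).
    assert (Hx2 : Rabs x < 1/2) by (eapply Rlt_le_trans; [exact Hx|apply Rmin_r]).
    unfold psi. destruct (Rle_dec 0 0); [|lra].
    destruct (Rle_dec x 0).
    + replace (L0 - L0) with 0 by ring. rewrite Rabs_R0. lra.
    + destruct (Rle_dec 1 x).
      * apply Rlt_le in Hx2. apply absle in Hx2. lra.
      * apply Hd2. rewrite Rabs_right in Hxd by lra. split; lra.
  - destruct (Req_dec z 1) as [->|Hz1].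
    + destruct (HL1 eps Heps) as [d [Hd Hd2]].
      exists (Rmin d (1/2)). split. { apply Rmin_glb_lt; lra. }
      intros x [_ Hx].
      assert (Hxd : Rabs (x-1) < d) by (eapply Rlt_le_trans; [exact Hx|apply Rmin_l]).
      assert (Hx2 : Rabs (x-1) < 1/2) by (eapply Rlt_le_trans; [exact Hx|apply Rmin_r]).
      unfold psi. destruct (Rle_dec 1 0); [lra|]. destruct (Rle_dec 1 1); [|lra].
      apply Rlt_le in Hx2. apply absle in Hx2.
      destruct (Rle_dec x 0); [lra|].
      destruct (Rle_dec 1 x).
      * replace (L1 - L1) with 0 by ring. rewrite Rabs_R0. lra.
      * replace x with (1 - (1 - x)) at 1 by ring. apply Hd2.
        assert (Rabs (x - 1) = 1 - x) by (rewrite Rabs_left; lra). lra.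
    + assert (Hz' : 0 < z < 1) by lra.
      set (a := z/2). set (b := (1+z)/2).
      assert (Ha : 0 < a) by (unfold a; lra). assert (Hb1 : b < 1) by (unfold b; lra).
      set (Lc := LL M a b).
      assert (HM : 0 <= M) by (pose proof (Hb 0 ltac:(lra)); pose proof (Rabs_pos (phi 0)); lra).
      assert (HLc : 0 <= Lc).
      { unfold Lc, LL. apply Rmult_le_pos; [lra|]. 
        assert (0 < /a) by (apply Rinv_0_lt_compat; lra).
        assert (0 < /(1-b)) by (apply Rinv_0_lt_compat; lra). lra. }
      exists (Rmin (z/2) (Rmin ((1-z)/2) (eps/(Lc+1)))).
      split. { apply Rmin_glb_lt; [lra|]. apply Rmin_glb_lt; [lra|]. apply Rdiv_lt_0_compat; lra. }
      intros x [_ Hx].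
      assert (H1 : Rabs (x-z) < z/2) by (eapply Rlt_le_trans; [exact Hx|apply Rmin_l]).
      assert (H2 : Rabs (x-z) < (1-z)/2).
      { eapply Rlt_le_trans; [exact Hx|]. eapply Rle_trans; [apply Rmin_r|apply Rmin_l]. }
      assert (H3 : Rabs (x-z) < eps/(Lc+1)).
      { eapply Rlt_le_trans; [exact Hx|]. eapply Rle_trans; [apply Rmin_r|apply Rmin_r]. }
      pose proof H1 as H1'. apply Rlt_le in H1'. apply absle in H1'.
      pose proof H2 as H2'. apply Rlt_le in H2'. apply absle in H2'.
      unfold psi.
      destruct (Rle_dec x 0); [lra|]. destruct (Rle_dec 1 x); [lra|].
      destruct (Rle_dec z 0); [lra|]. destruct (Rle_dec 1 z); [lra|].
      assert (Hlt : Lc * Rabs (x - z) < eps).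
      { apply Rle_lt_trans with ((Lc+1) * Rabs (x-z)).
        - pose proof (Rabs_pos (x-z)). nra.
        - replace eps with ((Lc+1) * (eps/(Lc+1))) by (field; lra).
          apply Rmult_lt_compat_l; lra. }
      destruct (Rle_dec x z).
      * rewrite Rabs_minus_sym.
        eapply Rle_lt_trans; [apply (lip1 phi M a b x z Hc Hb Ha Hb1); unfold a, b in *; lra|].
        fold Lc. rewrite Rabs_left1 in Hlt by lra. lra.
      * eapply Rle_lt_trans; [apply (lip1 phi M a b z x Hc Hb Ha Hb1); unfold a, b in *; lra|].
        fold Lc. rewrite Rabs_right in Hlt by lra. lra.
Qed.

Lemma conv_ex phi M c d : conv1 phi -> bnd1 phi M -> 0 <= c -> c <= d -> d <= 1 -> ex_RInt phi c d.
Proof.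
  intros Hc Hb H1 H2 H3.
  pose proof (conv_ex01 phi M Hc Hb) as E.
  apply (@ex_RInt_Chasles_2 R_CompleteNormedModule) with 0; [lra|].
  apply (@ex_RInt_Chasles_1 R_CompleteNormedModule) with 1; [lra|exact E].
Qed.

Lemma RI_le f g c d : c <= d -> ex_RInt f c d -> ex_RInt g c d ->
  (forall x, c <= x <= d -> f x <= g x) -> RInt f c d <= RInt g c d.
Proof. intros H E1 E2 H3. apply RInt_le; auto. intros; apply H3; lra. Qed.

Lemma RI_lin f g al be c d : ex_RInt f c d -> ex_RInt g c d ->
  RInt (fun x => al * f x + be * g x) c d = al * RInt f c d + be * RInt g c d.
Proof.
  intros E1 E2.
  rewrite ((@RInt_plus R_CompleteNormedModule) (fun x => al * f x) (fun x => be * g x)).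
  - rewrite ((@RInt_scal R_CompleteNormedModule) f), ((@RInt_scal R_CompleteNormedModule) g) by assumption. reflexivity.
  - apply ((@ex_RInt_scal R_NormedModule) f). exact E1.
  - apply ((@ex_RInt_scal R_NormedModule) g). exact E2.
Qed.

Lemma ex_lin f g al be c d : ex_RInt f c d -> ex_RInt g c d ->
  ex_RInt (fun x => al * f x + be * g x) c d.
Proof.
  intros E1 E2. apply ((@ex_RInt_plus R_NormedModule) (fun x => al * f x) (fun x => be * g x)).
  - apply ((@ex_RInt_scal R_NormedModule) f). exact E1.
  - apply ((@ex_RInt_scal R_NormedModule) g). exact E2.
Qed.

Lemma RI_const k c d : RInt (fun _ => k) c d = (d - c) * k.
Proof. rewrite (@RInt_const R_CompleteNormedModule). reflexivity. Qed.

Lemma RI_minus f g c d : ex_RInt f c d -> ex_RInt g c d ->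
  RInt f c d - RInt g c d = RInt (fun x => f x - g x) c d.
Proof. intros E1 E2. rewrite ((@RInt_minus R_CompleteNormedModule) f g) by assumption. reflexivity. Qed.

Lemma ex_minus f g c d : ex_RInt f c d -> ex_RInt g c d -> ex_RInt (fun x => f x - g x) c d.
Proof. intros E1 E2. apply ((@ex_RInt_minus R_NormedModule) f g); assumption. Qed.

Lemma RI_bound f c d K : c <= d -> ex_RInt f c d -> (forall x, c <= x <= d -> Rabs (f x) <= K) ->
  Rabs (RInt f c d) <= (d - c) * K.
Proof. intros; apply abs_RInt_le_const; auto. Qed.

Lemma RI_chasles f a b c : ex_RInt f a b -> ex_RInt f b c -> RInt f a b + RInt f b c = RInt f a c.
Proof. intros E1 E2. rewrite <- ((@RInt_Chasles R_CompleteNormedModule) f a b c E1 E2). reflexivity. Qed.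

Definition in01 x := 0 <= x <= 1.
Definition conv2 (G : R -> R -> R) := forall x1 y1 x2 y2 l, in01 x1 -> in01 y1 -> in01 x2 -> in01 y2 -> in01 l ->
  G (l*x1+(1-l)*x2) (l*y1+(1-l)*y2) <= l * G x1 y1 + (1-l) * G x2 y2.
Definition bnd2 (G : R -> R -> R) M := forall x y, in01 x -> in01 y -> Rabs (G x y) <= M.
Definition conv3 (F : R -> R -> R -> R) := forall x1 y1 z1 x2 y2 z2 l,
  in01 x1 -> in01 y1 -> in01 z1 -> in01 x2 -> in01 y2 -> in01 z2 -> in01 l ->
  F (l*x1+(1-l)*x2) (l*y1+(1-l)*y2) (l*z1+(1-l)*z2) <= l * F x1 y1 z1 + (1-l) * F x2 y2 z2.
Definition bnd3 (F : R -> R -> R -> R) M := forall x y z, in01 x -> in01 y -> in01 z -> Rabs (F x y z) <= M.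

Lemma same l x : l*x+(1-l)*x = x. Proof. ring. Qed.

Lemma c2_fst G x0 : conv2 G -> in01 x0 -> conv1 (G x0).
Proof. intros H Hx x y l H1 H2 H3. pose proof (H x0 x x0 y l Hx H1 Hx H2 H3) as K. rewrite same in K. exact K. Qed.
Lemma c2_snd G y0 : conv2 G -> in01 y0 -> conv1 (fun x => G x y0).
Proof. intros H Hy x y l H1 H2 H3. pose proof (H x y0 y y0 l H1 Hy H2 Hy H3) as K. rewrite same in K. exact K. Qed.
Lemma b2_fst G M x0 : bnd2 G M -> in01 x0 -> bnd1 (G x0) M.
Proof. intros H Hx x Hx'. apply H; auto. Qed.
Lemma b2_snd G M y0 : bnd2 G M -> in01 y0 -> bnd1 (fun x => G x y0) M.
Proof. intros H Hy x Hx'. apply H; auto. Qed.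

Lemma c3_1 F x0 : conv3 F -> in01 x0 -> conv2 (F x0).
Proof. intros H Hx a b c d l H1 H2 H3 H4 H5. pose proof (H x0 a b x0 c d l Hx H1 H2 Hx H3 H4 H5) as K. rewrite same in K. exact K. Qed.
Lemma c3_2 F y0 : conv3 F -> in01 y0 -> conv2 (fun x z => F x y0 z).
Proof. intros H Hy a b c d l H1 H2 H3 H4 H5. pose proof (H a y0 b c y0 d l H1 Hy H2 H3 Hy H4 H5) as K. rewrite same in K. exact K. Qed.
Lemma c3_3 F z0 : conv3 F -> in01 z0 -> conv2 (fun x y => F x y z0).
Proof. intros H Hz a b c d l H1 H2 H3 H4 H5. pose proof (H a b z0 c d z0 l H1 H2 Hz H3 H4 Hz H5) as K. rewrite same in K. exact K. Qed.
Lemma b3_1 F M x0 : bnd3 F M -> in01 x0 -> bnd2 (F x0) M.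
Proof. intros H Hx a b H1 H2. apply H; auto. Qed.
Lemma b3_2 F M y0 : bnd3 F M -> in01 y0 -> bnd2 (fun x z => F x y0 z) M.
Proof. intros H Hx a b H1 H2. apply H; auto. Qed.
Lemma b3_3 F M z0 : bnd3 F M -> in01 z0 -> bnd2 (fun x y => F x y z0) M.
Proof. intros H Hx a b H1 H2. apply H; auto. Qed.

Lemma bnd1_M phi M : bnd1 phi M -> 0 <= M.
Proof. intros H. pose proof (H 0 ltac:(lra)). pose proof (Rabs_pos (phi 0)). lra. Qed.

Lemma L2 G M c d : conv2 G -> bnd2 G M -> 0 <= c -> c <= d -> d <= 1 ->
  conv1 (fun x => RInt (G x) c d) /\ bnd1 (fun x => RInt (G x) c d) M.
Proof.
  intros Hc Hb H1 H2 H3. split.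
  - intros x y l Hx Hy Hl. simpl.
    assert (Ex : ex_RInt (G x) c d) by (apply (conv_ex _ M); auto; [apply c2_fst|apply b2_fst]; auto).
    assert (Ey : ex_RInt (G y) c d) by (apply (conv_ex _ M); auto; [apply c2_fst|apply b2_fst]; auto).
    assert (Hxy : in01 (l*x+(1-l)*y)) by (unfold in01; split; nra).
    assert (Exy : ex_RInt (G (l*x+(1-l)*y)) c d) by (apply (conv_ex _ M); auto; [apply c2_fst|apply b2_fst]; auto).
    rewrite <- RI_lin by assumption.
    apply RI_le; auto. { apply ex_lin; auto. }
    intros z Hz. pose proof (Hc x z y z l Hx ltac:(unfold in01; lra) Hy ltac:(unfold in01; lra) Hl) as K.
    rewrite same in K. exact K.
  - intros x Hx. simpl.
    assert (Ex : ex_RInt (G x) c d) by (apply (conv_ex _ M); auto; [apply c2_fst|apply b2_fst]; auto).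
    eapply Rle_trans. apply RI_bound; auto.
    { intros z Hz. apply Hb; auto; unfold in01; lra. }
    pose proof (bnd1_M _ _ (b2_fst G M 0 Hb ltac:(unfold in01; lra))). nra.
Qed.

Lemma L3 F M c d : conv3 F -> bnd3 F M -> 0 <= c -> c <= d -> d <= 1 ->
  conv2 (fun x y => RInt (F x y) c d) /\ bnd2 (fun x y => RInt (F x y) c d) M.
Proof.
  intros Hc Hb H1 H2 H3.
  assert (EX : forall x y, in01 x -> in01 y -> ex_RInt (F x y) c d).
  { intros x y Hx Hy. apply (conv_ex _ M); auto. apply c2_fst; auto. apply c3_1; auto.
    apply b2_fst; auto. apply b3_1; auto. }
  split.
  - intros x1 y1 x2 y2 l Hx1 Hy1 Hx2 Hy2 Hl. simpl.
    assert (Hx : in01 (l*x1+(1-l)*x2)) by (unfold in01 in *; split; nra).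
    assert (Hy : in01 (l*y1+(1-l)*y2)) by (unfold in01 in *; split; nra).
    rewrite <- RI_lin by (apply EX; auto).
    apply RI_le; auto. { apply ex_lin; apply EX; auto. }
    intros z Hz. pose proof (Hc x1 y1 z x2 y2 z l Hx1 Hy1 ltac:(unfold in01; lra) Hx2 Hy2 ltac:(unfold in01; lra) Hl) as K.
    rewrite same in K. exact K.
  - intros x y Hx Hy. simpl.
    eapply Rle_trans. apply RI_bound; auto.
    { intros z Hz. apply Hb; auto; unfold in01; lra. }
    pose proof (bnd1_M _ _ (b2_fst _ M 0 (b3_1 F M 0 Hb ltac:(unfold in01; lra)) ltac:(unfold in01; lra))). nra.
Qed.

Lemma RI_add f g c d : ex_RInt f c d -> ex_RInt g c d ->
  RInt (fun x => f x + g x) c d = RInt f c d + RInt g c d.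
Proof. intros E1 E2. rewrite ((@RInt_plus R_CompleteNormedModule) f g) by assumption. reflexivity. Qed.
Lemma ex_add f g c d : ex_RInt f c d -> ex_RInt g c d -> ex_RInt (fun x => f x + g x) c d.
Proof. intros E1 E2. apply ((@ex_RInt_plus R_NormedModule) f g); assumption. Qed.
Lemma RI_ext (f g : R -> R) c d : c <= d -> (forall x, c < x < d -> f x = g x) -> RInt f c d = RInt g c d.
Proof. intros H H2. apply RInt_ext. intros x Hx. rewrite Rmin_left in Hx by lra. rewrite Rmax_right in Hx by lra. apply H2; lra. Qed.
Lemma ex_ext (f g : R -> R) c d : c <= d -> (forall x, c < x < d -> f x = g x) -> ex_RInt f c d -> ex_RInt g c d.
Proof. intros H H2. apply ex_RInt_ext. intros x Hx. rewrite Rmin_left in Hx by lra. rewrite Rmax_right in Hx by lra. apply H2; lra. Qed.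

Lemma RI_scal f k c d : ex_RInt f c d -> RInt (fun x => k * f x) c d = k * RInt f c d.
Proof. intros E. rewrite ((@RInt_scal R_CompleteNormedModule) f) by assumption. reflexivity. Qed.
Lemma ex_scal f k c d : ex_RInt f c d -> ex_RInt (fun x => k * f x) c d.
Proof. intros E. apply ((@ex_RInt_scal R_NormedModule) f). exact E. Qed.


Ltac i01 := unfold in01 in *; lra.

Lemma c3_s F t r : conv3 F -> in01 t -> in01 r -> conv1 (fun s => F s t r).
Proof. intros H Ht Hr. apply (c2_snd (fun x y => F x y r)); auto. apply c3_3; auto. Qed.
Lemma c3_t F s r : conv3 F -> in01 s -> in01 r -> conv1 (fun t => F s t r).
Proof. intros H Hs Hr. apply (c2_snd (F s)); auto. apply c3_1; auto. Qed.
Lemma c3_r F s t : conv3 F -> in01 s -> in01 t -> conv1 (F s t).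
Proof. intros H Hs Ht. apply c2_fst; auto. apply c3_1; auto. Qed.
Lemma b3_s F M t r : bnd3 F M -> in01 t -> in01 r -> bnd1 (fun s => F s t r) M.
Proof. intros H Ht Hr x Hx. apply H; auto. Qed.
Lemma b3_t F M s r : bnd3 F M -> in01 s -> in01 r -> bnd1 (fun t => F s t r) M.
Proof. intros H Ht Hr x Hx. apply H; auto. Qed.
Lemma b3_r F M s t : bnd3 F M -> in01 s -> in01 t -> bnd1 (F s t) M.
Proof. intros H Ht Hr x Hx. apply H; auto. Qed.


Lemma ex1 F M s t c d : conv3 F -> bnd3 F M -> in01 s -> in01 t -> 0 <= c -> c <= d -> d <= 1 ->
  ex_RInt (F s t) c d.
Proof. intros. apply (conv_ex _ M); auto. apply c3_r; auto. apply b3_r; auto. Qed.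

Lemma ex1t F M t0 c d c' d' : conv3 F -> bnd3 F M -> in01 t0 -> 0 <= c -> c <= d -> d <= 1 ->
  0 <= c' -> c' <= d' -> d' <= 1 -> ex_RInt (fun s => RInt (fun r => F s t0 r) c d) c' d'.
Proof.
  intros HF HB Ht0 H1 H2 H3 H4 H5 H6.
  destruct (L2 (fun x z => F x t0 z) M c d (c3_2 F t0 HF Ht0) (b3_2 F M t0 HB Ht0) H1 H2 H3) as [Q1 Q2].
  apply (conv_ex _ M c' d' Q1 Q2); auto.
Qed.

Lemma ex1r F M r0 c d c' d' : conv3 F -> bnd3 F M -> in01 r0 -> 0 <= c -> c <= d -> d <= 1 ->
  0 <= c' -> c' <= d' -> d' <= 1 -> ex_RInt (fun s => RInt (fun t => F s t r0) c d) c' d'.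
Proof.
  intros HF HB Hr0 H1 H2 H3 H4 H5 H6.
  destruct (L2 (fun x y => F x y r0) M c d (c3_3 F r0 HF Hr0) (b3_3 F M r0 HB Hr0) H1 H2 H3) as [Q1 Q2].
  apply (conv_ex _ M c' d' Q1 Q2); auto.
Qed.

Lemma ex2 F M s c d c' d' : conv3 F -> bnd3 F M -> in01 s -> 0 <= c -> c <= d -> d <= 1 ->
  0 <= c' -> c' <= d' -> d' <= 1 -> ex_RInt (fun t => RInt (F s t) c d) c' d'.
Proof.
  intros HF HB Hs H1 H2 H3 H4 H5 H6.
  destruct (L2 (F s) M c d (c3_1 F s HF Hs) (b3_1 F M s HB Hs) H1 H2 H3) as [Q1 Q2].
  apply (conv_ex _ M c' d' Q1 Q2); auto.
Qed.

Lemma conv_A F M c d c' d' : conv3 F -> bnd3 F M -> 0 <= c -> c <= d -> d <= 1 ->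
  0 <= c' -> c' <= d' -> d' <= 1 ->
  conv1 (fun s => RInt (fun t => RInt (F s t) c d) c' d') /\ bnd1 (fun s => RInt (fun t => RInt (F s t) c d) c' d') M.
Proof.
  intros HF HB H1 H2 H3 H4 H5 H6.
  destruct (L3 F M c d HF HB H1 H2 H3) as [Q1 Q2].
  apply (L2 _ M c' d' Q1 Q2); auto.
Qed.

Lemma ex3 F M c d c' d' c'' d'' : conv3 F -> bnd3 F M -> 0 <= c -> c <= d -> d <= 1 ->
  0 <= c' -> c' <= d' -> d' <= 1 -> 0 <= c'' -> c'' <= d'' -> d'' <= 1 ->
  ex_RInt (fun s => RInt (fun t => RInt (F s t) c d) c' d') c'' d''.
Proof.
  intros HF HB H1 H2 H3 H4 H5 H6 H7 H8 H9.
  destruct (conv_A F M c d c' d' HF HB H1 H2 H3 H4 H5 H6) as [Q1 Q2].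
  apply (conv_ex _ M c'' d'' Q1 Q2); auto.
Qed.

Lemma ex2b F M s c d c' d' : conv3 F -> bnd3 F M -> in01 s -> 0 <= c -> c <= d -> d <= 1 ->
  0 <= c' -> c' <= d' -> d' <= 1 -> ex_RInt (fun t => RInt (F s t) c d) c' d' /\ True.
Proof. intros; split; [apply (ex2 F M); auto|exact I]. Qed.

Definition Phi (F : R -> R -> R -> R) l := RInt (fun s => RInt (fun t => RInt (F s t) 0 l) 0 l) 0 l.

Lemma shell F M mu l : conv3 F -> bnd3 F M -> 0 <= mu -> mu <= l -> l <= 1 ->
  Phi F l - Phi F mu = RInt (fun s => RInt (fun t => RInt (F s t) 0 l) 0 l) mu l
   + RInt (fun s => RInt (fun t => RInt (F s t) 0 l) mu l) 0 mu
   + RInt (fun s => RInt (fun t => RInt (F s t) mu l) 0 mu) 0 mu.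
Proof.
  intros HF HB H1 H2 H3. unfold Phi.
  rewrite <- (RI_chasles (fun s => RInt (fun t => RInt (F s t) 0 l) 0 l) 0 mu l) by (apply (ex3 F M); auto; lra).
  pose proof (RI_add (fun s => RInt (fun t => RInt (F s t) 0 l) mu l) (fun s => RInt (fun t => RInt (F s t) mu l) 0 mu) 0 mu
     ltac:(apply (ex3 F M); auto; lra) ltac:(apply (ex3 F M); auto; lra)) as Eadd.
  assert (E : RInt (fun s => RInt (fun t => RInt (F s t) 0 l) 0 l) 0 mu
     - RInt (fun s => RInt (fun t => RInt (F s t) 0 mu) 0 mu) 0 mu
     = RInt (fun s => RInt (fun t => RInt (F s t) 0 l) mu l + RInt (fun t => RInt (F s t) mu l) 0 mu) 0 mu).
  { rewrite RI_minus by (apply (ex3 F M); auto; lra).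
    apply RI_ext; [lra|]. intros s Hs. assert (Hs' : in01 s) by i01.
    rewrite <- (RI_chasles (fun t => RInt (F s t) 0 l) 0 mu l) by (apply (ex2 F M); auto; lra).
    assert (RInt (fun t => RInt (F s t) 0 l) 0 mu - RInt (fun t => RInt (F s t) 0 mu) 0 mu
            = RInt (fun t => RInt (F s t) mu l) 0 mu).
    { rewrite RI_minus by (apply (ex2 F M); auto; lra).
      apply RI_ext; [lra|]. intros t Ht. assert (Ht' : in01 t) by i01.
      rewrite <- (RI_chasles (F s t) 0 mu l) by (apply (ex1 F M); auto; lra). ring. }
    lra. }
  lra.
Qed.

Lemma pm (a b : R) : a + b - a = b. Proof. ring. Qed.

Lemma RI_close f g c d K : c <= d -> ex_RInt f c d -> ex_RInt g c d ->
  (forall x, c <= x <= d -> Rabs (f x - g x) <= K) -> Rabs (RInt f c d - RInt g c d) <= (d - c) * K.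
Proof.
  intros H E1 E2 H2. rewrite RI_minus by assumption.
  apply RI_bound; auto. apply ex_minus; auto.
Qed.

Lemma lipF_s F M a b s1 s2 t r : conv3 F -> bnd3 F M -> 0 < a -> b < 1 -> a <= s1 -> s1 <= s2 -> s2 <= b ->
  in01 t -> in01 r -> Rabs (F s2 t r - F s1 t r) <= LL M a b * (s2 - s1).
Proof. intros. apply (lip1 (fun s => F s t r)); auto. apply c3_s; auto. apply b3_s; auto. Qed.
Lemma lipF_t F M a b s t1 t2 r : conv3 F -> bnd3 F M -> 0 < a -> b < 1 -> a <= t1 -> t1 <= t2 -> t2 <= b ->
  in01 s -> in01 r -> Rabs (F s t2 r - F s t1 r) <= LL M a b * (t2 - t1).
Proof. intros. apply (lip1 (fun t => F s t r)); auto. apply c3_t; auto. apply b3_t; auto. Qed.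
Lemma lipF_r F M a b s t r1 r2 : conv3 F -> bnd3 F M -> 0 < a -> b < 1 -> a <= r1 -> r1 <= r2 -> r2 <= b ->
  in01 s -> in01 t -> Rabs (F s t r2 - F s t r1) <= LL M a b * (r2 - r1).
Proof. intros. apply (lip1 (F s t)); auto. apply c3_r; auto. apply b3_r; auto. Qed.

Lemma LL_pos M a b : 0 <= M -> 0 < a -> b < 1 -> 0 <= LL M a b.
Proof.
  intros HM Ha Hb. unfold LL. apply Rmult_le_pos; [lra|].
  assert (0 < /a) by (apply Rinv_0_lt_compat; lra).
  assert (0 < /(1-b)) by (apply Rinv_0_lt_compat; lra). lra.
Qed.

Lemma bnd3_M F M : bnd3 F M -> 0 <= M.
Proof. intros H. pose proof (H 0 0 0 ltac:(i01) ltac:(i01) ltac:(i01)). pose proof (Rabs_pos (F 0 0 0)). lra. Qed.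

Lemma abs_mul_le x y K : 0 <= x <= 1 -> Rabs y <= K -> Rabs (x * y) <= K.
Proof. intros H1 H2. rewrite Rabs_mult, Rabs_right by lra. pose proof (Rabs_pos y). nra. Qed.

Definition A_ (F : R -> R -> R -> R) l s : R := RInt (fun t => RInt (F s t) 0 l) 0 l.

Lemma E1 F M a b mu l : conv3 F -> bnd3 F M -> 0 < a -> b < 1 -> a <= mu -> mu <= l -> l <= b ->
  Rabs (RInt (A_ F l) mu l - (l - mu) * A_ F l l) <= LL M a b * (l - mu) ^ 2.
Proof.
  intros HF HB Ha Hb H1 H2 H3.
  assert (HM := bnd3_M F M HB). assert (HL := LL_pos M a b HM Ha Hb).
  rewrite <- (RI_const (A_ F l l) mu l).
  replace (LL M a b * (l - mu) ^ 2) with ((l - mu) * (LL M a b * (l - mu))) by ring.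
  apply RI_close; auto. { apply (ex3 F M); auto; lra. } { apply ex_RInt_const. }
  intros s Hs. unfold A_.
  apply Rle_trans with ((l - 0) * ((l - 0) * (LL M a b * (l - mu)))).
  2: { assert (0 <= LL M a b * (l - mu)) by (apply Rmult_le_pos; lra).
       assert (0 <= l * (LL M a b * (l - mu)) <= LL M a b * (l - mu)) by (split; nra). nra. }
  apply RI_close; [lra|apply (ex2 F M); auto; i01|apply (ex2 F M); auto; i01|].
  intros t Ht.
  apply RI_close; [lra|apply (ex1 F M); auto; i01|apply (ex1 F M); auto; i01|].
  intros r Hr. rewrite Rabs_minus_sym.
  eapply Rle_trans. apply (lipF_s F M a b); auto; try lra; i01.
  apply Rmult_le_compat_l; lra.
Qed.

Lemma E2 F M a b mu l : conv3 F -> bnd3 F M -> 0 < a -> b < 1 -> a <= mu -> mu <= l -> l <= b ->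
  Rabs (RInt (fun s => RInt (fun t => RInt (F s t) 0 l) mu l) 0 mu
        - (l - mu) * RInt (fun s => RInt (F s l) 0 l) 0 l) <= (LL M a b + M) * (l - mu) ^ 2.
Proof.
  intros HF HB Ha Hb H1 H2 H3.
  assert (HM := bnd3_M F M HB). assert (HL := LL_pos M a b HM Ha Hb).
  assert (Hl : in01 l) by i01.
  assert (EC : ex_RInt (fun s => RInt (F s l) 0 l) 0 mu) by (apply (ex1t F M); auto; lra).
  assert (EC' : ex_RInt (fun s => RInt (F s l) 0 l) mu l) by (apply (ex1t F M); auto; lra).
  assert (P1 : Rabs (RInt (fun s => RInt (fun t => RInt (F s t) 0 l) mu l) 0 mu
       - RInt (fun s => (l - mu) * RInt (F s l) 0 l) 0 mu) <= LL M a b * (l - mu) ^ 2).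
  { apply Rle_trans with ((mu - 0) * ((l - mu) * ((l - 0) * (LL M a b * (l - mu))))).
    2: { assert (0 <= LL M a b * (l - mu)) by (apply Rmult_le_pos; lra).
         assert (0 <= l * (LL M a b * (l - mu)) <= LL M a b * (l - mu)) by (split; nra).
         assert (0 <= (l-mu) * (l * (LL M a b * (l - mu))) <= (l-mu) * (LL M a b * (l - mu))) by (split; nra).
         replace (LL M a b * (l - mu) ^ 2) with ((l-mu) * (LL M a b * (l - mu))) by ring.
         nra. }
    apply RI_close; [lra| apply (ex3 F M); auto; lra | apply ex_scal; auto |].
    intros s Hs. assert (Hs' : in01 s) by i01.
    rewrite <- (RI_const (RInt (F s l) 0 l) mu l).
    apply RI_close; [lra| apply (ex2 F M); auto; lra | apply ex_RInt_const |].
    intros t Ht. assert (Ht' : in01 t) by i01.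
    apply RI_close; [lra| apply (ex1 F M); auto; lra | apply (ex1 F M); auto; lra |].
    intros r Hr. rewrite Rabs_minus_sym.
    eapply Rle_trans. apply (lipF_t F M a b); auto; try lra; i01.
    apply Rmult_le_compat_l; lra. }
  rewrite RI_scal in P1 by exact EC.
  assert (P2 : Rabs (RInt (fun s => RInt (F s l) 0 l) mu l) <= (l - mu) * M).
  { apply RI_bound; [lra|exact EC'|]. intros s Hs.
    destruct (L2 (fun x z => F x l z) M 0 l (c3_2 F l HF Hl) (b3_2 F M l HB Hl) ltac:(lra) ltac:(lra) ltac:(lra)) as [_ Q2].
    apply Q2. lra. }
  rewrite <- (RI_chasles (fun s => RInt (F s l) 0 l) 0 mu l) by assumption.
  apply absle in P1. apply absle in P2.
  assert (0 <= (l - mu)) by lra.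
  apply Rabs_le. split; nra.
Qed.

Lemma E3 F M a b mu l : conv3 F -> bnd3 F M -> 0 < a -> b < 1 -> a <= mu -> mu <= l -> l <= b ->
  Rabs (RInt (fun s => RInt (fun t => RInt (F s t) mu l) 0 mu) 0 mu
        - (l - mu) * RInt (fun s => RInt (fun t => F s t l) 0 l) 0 l) <= (LL M a b + 2 * M) * (l - mu) ^ 2.
Proof.
  intros HF HB Ha Hb H1 H2 H3.
  assert (HM := bnd3_M F M HB). assert (HL := LL_pos M a b HM Ha Hb).
  assert (Hl : in01 l) by i01.
  assert (EH : ex_RInt (fun s => RInt (fun t => F s t l) 0 mu) 0 mu) by (apply (ex1r F M); auto; lra).
  assert (P1 : Rabs (RInt (fun s => RInt (fun t => RInt (F s t) mu l) 0 mu) 0 mu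
       - RInt (fun s => (l - mu) * RInt (fun t => F s t l) 0 mu) 0 mu) <= LL M a b * (l - mu) ^ 2).
  { apply Rle_trans with ((mu - 0) * ((mu - 0) * ((l - mu) * (LL M a b * (l - mu))))).
    2: { assert (0 <= LL M a b * (l - mu)) by (apply Rmult_le_pos; lra).
         assert (0 <= (l-mu) * (LL M a b * (l - mu))) by (apply Rmult_le_pos; lra).
         assert (0 <= mu * ((l-mu) * (LL M a b * (l - mu))) <= (l-mu) * (LL M a b * (l - mu))) by (split; nra).
         replace (LL M a b * (l - mu) ^ 2) with ((l-mu) * (LL M a b * (l - mu))) by ring.
         nra. }
    apply RI_close; [lra| apply (ex3 F M); auto; lra | apply ex_scal; auto |].
    intros s Hs. assert (Hs' : in01 s) by i01.
    rewrite <- RI_scal by (apply (conv_ex _ M); [apply c3_t; auto; i01 | apply b3_t; auto; i01 | lra..]).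
    apply RI_close; [lra| apply (ex2 F M); auto; lra | apply ex_scal; (apply (conv_ex _ M); [apply c3_t; auto; i01 | apply b3_t; auto; i01 | lra..]) |].
    intros t Ht. assert (Ht' : in01 t) by i01.
    rewrite <- (RI_const (F s t l) mu l).
    apply RI_close; [lra| apply (ex1 F M); auto; lra | apply ex_RInt_const |].
    intros r Hr. rewrite Rabs_minus_sym.
    eapply Rle_trans. apply (lipF_r F M a b); auto; try lra; i01.
    apply Rmult_le_compat_l; lra. }
  rewrite RI_scal in P1 by exact EH.
  assert (P2 : Rabs (RInt (fun s => RInt (fun t => F s t l) 0 l) 0 l - RInt (fun s => RInt (fun t => F s t l) 0 mu) 0 mu) <= 2 * M * (l - mu)).
  { rewrite <- (RI_chasles (fun s => RInt (fun t => F s t l) 0 l) 0 mu l) by (apply (ex1r F M); auto; lra).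
    assert (Q1 : Rabs (RInt (fun s => RInt (fun t => F s t l) 0 l) mu l) <= (l - mu) * M).
    { apply RI_bound; [lra| apply (ex1r F M); auto; lra|]. intros s Hs.
      destruct (L2 (fun x y => F x y l) M 0 l (c3_3 F l HF Hl) (b3_3 F M l HB Hl) ltac:(lra) ltac:(lra) ltac:(lra)) as [_ Q2].
      apply Q2. i01. }
    assert (Q3 : Rabs (RInt (fun s => RInt (fun t => F s t l) 0 l) 0 mu - RInt (fun s => RInt (fun t => F s t l) 0 mu) 0 mu) <= (mu - 0) * ((l - mu) * M)).
    { apply RI_close; [lra| apply (ex1r F M); auto; lra| apply (ex1r F M); auto; lra|].
      intros s Hs. assert (Hs' : in01 s) by i01.
      rewrite <- (RI_chasles (fun t => F s t l) 0 mu l) by (apply (conv_ex _ M); [apply c3_t; auto; i01 | apply b3_t; auto; i01 | lra..]).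
      rewrite pm.
      apply RI_bound; [lra | apply (conv_ex _ M); [apply c3_t; auto; i01 | apply b3_t; auto; i01 | lra..] |].
      intros t Ht. apply HB; i01. }
    apply absle in Q1. apply absle in Q3.
    assert (0 <= mu * ((l-mu)*M) <= (l-mu)*M) by (split; [apply Rmult_le_pos; [lra|apply Rmult_le_pos; lra]| nra]).
    apply Rabs_le. split; nra. }
  apply absle in P1. apply absle in P2.
  assert (0 <= (l - mu)) by lra.
  apply Rabs_le. split; nra.
Qed.

Definition Sig (F : R -> R -> R -> R) l : R := A_ F l l + RInt (fun s => RInt (F s l) 0 l) 0 l
   + RInt (fun s => RInt (fun t => F s t l) 0 l) 0 l.

Lemma shellK F M a b mu l : conv3 F -> bnd3 F M -> 0 < a -> b < 1 -> a <= mu -> mu <= l -> l <= b ->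
  Rabs (Phi F l - Phi F mu - (l - mu) * Sig F l) <= (3 * LL M a b + 3 * M) * (l - mu) ^ 2.
Proof.
  intros HF HB Ha Hb H1 H2 H3.
  rewrite (shell F M mu l) by (auto; lra).
  pose proof (E1 F M a b mu l HF HB Ha Hb H1 H2 H3) as P1.
  pose proof (E2 F M a b mu l HF HB Ha Hb H1 H2 H3) as P2.
  pose proof (E3 F M a b mu l HF HB Ha Hb H1 H2 H3) as P3.
  change (RInt (fun s => RInt (fun t => RInt (F s t) 0 l) 0 l) mu l) with (RInt (A_ F l) mu l).
  unfold Sig.
  apply absle in P1. apply absle in P2. apply absle in P3.
  apply Rabs_le. split; nra.
Qed.

Lemma phi_lip F M mu l : conv3 F -> bnd3 F M -> 0 <= mu -> mu <= l -> l <= 1 ->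
  Rabs (Phi F l - Phi F mu) <= 3 * M * (l - mu).
Proof.
  intros HF HB H1 H2 H3.
  assert (HM := bnd3_M F M HB).
  rewrite (shell F M mu l) by (auto; lra).
  assert (Q1 : Rabs (RInt (fun s => RInt (fun t => RInt (F s t) 0 l) 0 l) mu l) <= (l - mu) * M).
  { apply RI_bound; [lra|apply (ex3 F M); auto; lra|]. intros s Hs.
    destruct (conv_A F M 0 l 0 l HF HB ltac:(lra) ltac:(lra) ltac:(lra) ltac:(lra) ltac:(lra) ltac:(lra)) as [_ B].
    apply B. lra. }
  assert (Q2 : Rabs (RInt (fun s => RInt (fun t => RInt (F s t) 0 l) mu l) 0 mu) <= (mu - 0) * ((l - mu) * M)).
  { apply RI_bound; [lra|apply (ex3 F M); auto; lra|]. intros s Hs.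
    apply RI_bound; [lra|apply (ex2 F M); auto; i01|]. intros t Ht.
    destruct (L3 F M 0 l HF HB ltac:(lra) ltac:(lra) ltac:(lra)) as [_ B].
    apply B; i01. }
  assert (Q3 : Rabs (RInt (fun s => RInt (fun t => RInt (F s t) mu l) 0 mu) 0 mu) <= (mu - 0) * ((mu - 0) * ((l - mu) * M))).
  { apply RI_bound; [lra|apply (ex3 F M); auto; lra|]. intros s Hs.
    apply RI_bound; [lra|apply (ex2 F M); auto; i01|]. intros t Ht.
    apply RI_bound; [lra|apply (ex1 F M); auto; i01|]. intros r Hr. apply HB; i01. }
  assert (0 <= (l - mu) * M) by (apply Rmult_le_pos; lra).
  assert (mu * ((l - mu) * M) <= (l - mu) * M) by nra.
  assert (0 <= mu * ((l - mu) * M)) by (apply Rmult_le_pos; lra).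
  assert (mu * (mu * ((l - mu) * M)) <= (l - mu) * M) by nra.
  apply absle in Q1. apply absle in Q2. apply absle in Q3.
  apply Rabs_le. split; nra.
Qed.

Lemma conv1_scale phi l : conv1 phi -> 0 <= l <= 1 -> conv1 (fun y => phi (l * y)).
Proof.
  intros H Hl x y k Hx Hy Hk. simpl.
  replace (l * (k*x+(1-k)*y)) with (k*(l*x)+(1-k)*(l*y)) by ring.
  apply H; auto; split; nra.
Qed.
Lemma bnd1_scale phi M l : bnd1 phi M -> 0 <= l <= 1 -> bnd1 (fun y => phi (l * y)) M.
Proof. intros H Hl x Hx. apply H. split; nra. Qed.
Lemma conv2_scale2 G l : conv2 G -> 0 <= l <= 1 -> conv2 (fun x y => G x (l * y)).
Proof.
  intros H Hl x1 y1 x2 y2 k H1 H2 H3 H4 H5. simpl.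
  replace (l * (k*y1+(1-k)*y2)) with (k*(l*y1)+(1-k)*(l*y2)) by ring.
  apply H; auto; unfold in01 in *; split; nra.
Qed.
Lemma bnd2_scale2 G M l : bnd2 G M -> 0 <= l <= 1 -> bnd2 (fun x y => G x (l * y)) M.
Proof. intros H Hl x y Hx Hy. apply H; auto. unfold in01 in *; split; nra. Qed.

Lemma sub1 phi M l : conv1 phi -> bnd1 phi M -> 0 <= l <= 1 ->
  RInt phi 0 l = l * RInt (fun y => phi (l * y)) 0 1.
Proof.
  intros Hc Hb Hl.
  assert (E : ex_RInt phi (l*0+0) (l*1+0)).
  { replace (l*0+0) with 0 by ring. replace (l*1+0) with l by ring. apply (conv_ex _ M); auto; lra. }
  pose proof ((@RInt_comp_lin R_CompleteNormedModule) phi l 0 0 1 E) as H.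
  replace (l*0+0) with 0 in H by ring. replace (l*1+0) with l in H by ring.
  rewrite <- H. rewrite <- RI_scal.
  - apply RI_ext; [lra|]. intros x Hx. rewrite Rplus_0_r. reflexivity.
  - apply (conv_ex _ M); [apply conv1_scale|apply bnd1_scale|..]; auto; lra.
Qed.

Lemma sub2 G M l : conv2 G -> bnd2 G M -> 0 <= l <= 1 ->
  RInt (fun x => RInt (G x) 0 l) 0 l = l ^ 2 * RInt (fun x => RInt (fun y => G (l * x) (l * y)) 0 1) 0 1.
Proof.
  intros Hc Hb Hl.
  destruct (L2 (fun x y => G x (l * y)) M 0 1 (conv2_scale2 G l Hc Hl) (bnd2_scale2 G M l Hb Hl) ltac:(lra) ltac:(lra) ltac:(lra)) as [Q1 Q2].
  rewrite (RI_ext _ (fun x => l * RInt (fun y => G x (l * y)) 0 1) 0 l); [| lra |].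
  2: { intros x Hx. apply (sub1 _ M); auto. apply c2_fst; auto; i01. apply b2_fst; auto; i01. }
  rewrite RI_scal by (apply (conv_ex _ M); auto; lra).
  rewrite (sub1 _ M l Q1 Q2 Hl). simpl. ring.
Qed.

Definition T1 (F : R -> R -> R -> R) l := RInt (fun t => RInt (fun r => F l (l * t) (l * r)) 0 1) 0 1.
Definition T2 (F : R -> R -> R -> R) l := RInt (fun s => RInt (fun r => F (l * s) l (l * r)) 0 1) 0 1.
Definition T3 (F : R -> R -> R -> R) l := RInt (fun s => RInt (fun t => F (l * s) (l * t) l) 0 1) 0 1.

Lemma Sig_scale F M l : conv3 F -> bnd3 F M -> 0 <= l <= 1 ->
  Sig F l = l ^ 2 * (T1 F l + T2 F l + T3 F l).
Proof.
  intros HF HB Hl. assert (Hl' : in01 l) by exact Hl. unfold Sig, A_.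
  rewrite (sub2 (F l) M l) by (first [apply c3_1; auto | apply b3_1; auto | auto]).
  rewrite (sub2 (fun x => F x l) M l) by (first [apply c3_2; auto | apply b3_2; auto | auto]).
  rewrite (sub2 (fun x y => F x y l) M l) by (first [apply c3_3; auto | apply b3_3; auto | auto]).
  unfold T1, T2, T3. ring.
Qed.

Lemma conv2_scale G l : conv2 G -> 0 <= l <= 1 -> conv2 (fun x y => G (l * x) (l * y)).
Proof.
  intros H Hl x1 y1 x2 y2 k H1 H2 H3 H4 H5. simpl.
  replace (l * (k*x1+(1-k)*x2)) with (k*(l*x1)+(1-k)*(l*x2)) by ring.
  replace (l * (k*y1+(1-k)*y2)) with (k*(l*y1)+(1-k)*(l*y2)) by ring.
  apply H; auto; unfold in01 in *; split; nra.
Qed.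
Lemma bnd2_scale G M l : bnd2 G M -> 0 <= l <= 1 -> bnd2 (fun x y => G (l * x) (l * y)) M.
Proof. intros H Hl x y Hx Hy. apply H; unfold in01 in *; split; nra. Qed.

Lemma ex_in2 G M : conv2 G -> bnd2 G M -> (forall x, in01 x -> ex_RInt (G x) 0 1) /\
  ex_RInt (fun x => RInt (G x) 0 1) 0 1.
Proof.
  intros Hc Hb. split.
  - intros x Hx. apply (conv_ex _ M); [apply c2_fst|apply b2_fst|..]; auto; lra.
  - destruct (L2 G M 0 1 Hc Hb ltac:(lra) ltac:(lra) ltac:(lra)) as [Q1 Q2].
    apply (conv_ex _ M); auto; lra.
Qed.

Lemma RI2_le (g h : R -> R -> R) M al be : conv2 g -> bnd2 g M -> conv2 h -> bnd2 h M ->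
  (forall x y, in01 x -> in01 y -> g x y <= al * h x y + be) ->
  RInt (fun x => RInt (g x) 0 1) 0 1 <= al * RInt (fun x => RInt (h x) 0 1) 0 1 + be.
Proof.
  intros Hg Bg Hh Bh H.
  destruct (ex_in2 g M Hg Bg) as [Eg Eg2]. destruct (ex_in2 h M Hh Bh) as [Eh Eh2].
  assert (Ec : forall c d, ex_RInt (fun _ : R => 1) c d) by (intros; apply ex_RInt_const).
  apply Rle_trans with (RInt (fun x => al * RInt (h x) 0 1 + be * 1) 0 1).
  - apply RI_le; [lra|auto|apply ex_lin; auto|].
    intros x Hx.
    apply Rle_trans with (RInt (fun y => al * h x y + be * 1) 0 1).
    + apply RI_le; [lra|apply Eg; i01|apply ex_lin; auto; apply Eh; i01|].
      intros y Hy. rewrite Rmult_1_r. apply H; i01.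
    + rewrite RI_lin by (auto; apply Eh; i01). rewrite RI_const. lra.
  - rewrite RI_lin by auto. rewrite RI_const. lra.
Qed.

Lemma T_upper F M l : conv3 F -> bnd3 F M -> 0 <= l <= 1 ->
  T1 F l <= l * RInt (fun t => RInt (fun r => F 1 t r) 0 1) 0 1 + (1 - l) * F 0 0 0 /\
  T2 F l <= l * RInt (fun s => RInt (fun r => F s 1 r) 0 1) 0 1 + (1 - l) * F 0 0 0 /\
  T3 F l <= l * RInt (fun s => RInt (fun t => F s t 1) 0 1) 0 1 + (1 - l) * F 0 0 0.
Proof.
  intros HF HB Hl. assert (Hl' : in01 l) by exact Hl.
  assert (H1 : in01 1) by i01.
  assert (key : forall x y z, in01 x -> in01 y -> in01 z ->
     F (l * x) (l * y) (l * z) <= l * F x y z + (1 - l) * F 0 0 0).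
  { intros x y z Hx Hy Hz. pose proof (HF x y z 0 0 0 l Hx Hy Hz ltac:(i01) ltac:(i01) ltac:(i01) Hl') as K.
    replace (l * x + (1 - l) * 0) with (l * x) in K by ring.
    replace (l * y + (1 - l) * 0) with (l * y) in K by ring.
    replace (l * z + (1 - l) * 0) with (l * z) in K by ring. exact K. }
  split; [|split].
  - unfold T1. apply (RI2_le (fun t r => F l (l * t) (l * r)) (F 1) M).
    + apply (conv2_scale (F l)); auto. apply c3_1; auto.
    + apply (bnd2_scale (F l)); auto. apply b3_1; auto.
    + apply c3_1; auto.
    + apply b3_1; auto.
    + intros x y Hx Hy. pose proof (key 1 x y H1 Hx Hy) as K. rewrite Rmult_1_r in K. exact K.
  - unfold T2. apply (RI2_le (fun s r => F (l * s) l (l * r)) (fun s r => F s 1 r) M).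
    + apply (conv2_scale (fun s r => F s l r)); auto. apply c3_2; auto.
    + apply (bnd2_scale (fun s r => F s l r)); auto. apply b3_2; auto.
    + apply c3_2; auto.
    + apply b3_2; auto.
    + intros x y Hx Hy. pose proof (key x 1 y Hx H1 Hy) as K. rewrite Rmult_1_r in K. exact K.
  - unfold T3. apply (RI2_le (fun s t => F (l * s) (l * t) l) (fun s t => F s t 1) M).
    + apply (conv2_scale (fun s t => F s t l)); auto. apply c3_3; auto.
    + apply (bnd2_scale (fun s t => F s t l)); auto. apply b3_3; auto.
    + apply c3_3; auto.
    + apply b3_3; auto.
    + intros x y Hx Hy. pose proof (key x y 1 Hx Hy H1) as K. rewrite Rmult_1_r in K. exact K.
Qed.

Lemma Lpar (H : R -> R -> R) : (forall y, 0 <= y <= 1 -> conv1 (fun x => H x y)) ->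
  (forall x, in01 x -> ex_RInt (H x) 0 1) -> conv1 (fun x => RInt (H x) 0 1).
Proof.
  intros Hc Ex x y l Hx Hy Hl. simpl.
  assert (Hxy : in01 (l*x+(1-l)*y)) by (unfold in01; split; nra).
  rewrite <- RI_lin by (apply Ex; i01).
  apply RI_le; [lra|apply Ex; auto|apply ex_lin; apply Ex; i01|].
  intros z Hz. apply (Hc z Hz x y l); auto.
Qed.

Lemma conv1_ext (f g : R -> R) : (forall x, 0 <= x <= 1 -> f x = g x) -> conv1 f -> conv1 g.
Proof.
  intros He Hc x y l Hx Hy Hl. rewrite <- !He by (auto; split; nra). apply Hc; auto.
Qed.

Lemma ray F x y z : conv3 F -> in01 x -> in01 y -> in01 z -> conv1 (fun l => F (l * x) (l * y) (l * z)).
Proof.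
  intros HF Hx Hy Hz l1 l2 k H1 H2 Hk. simpl.
  replace ((k * l1 + (1 - k) * l2) * x) with (k * (l1 * x) + (1 - k) * (l2 * x)) by ring.
  replace ((k * l1 + (1 - k) * l2) * y) with (k * (l1 * y) + (1 - k) * (l2 * y)) by ring.
  replace ((k * l1 + (1 - k) * l2) * z) with (k * (l1 * z) + (1 - k) * (l2 * z)) by ring.
  apply HF; unfold in01 in *; try split; nra.
Qed.

Lemma T2D_conv F M (G : R -> R -> R -> R) :
  conv3 F -> bnd3 F M ->
  (forall x y, in01 x -> in01 y -> conv1 (fun l => G l x y)) ->
  (forall l, in01 l -> conv2 (G l) /\ bnd2 (G l) M) ->
  conv1 (fun l => RInt (fun x => RInt (G l x) 0 1) 0 1) /\ bnd1 (fun l => RInt (fun x => RInt (G l x) 0 1) 0 1) M.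
Proof.
  intros HF HB Hray HG. assert (HM := bnd3_M F M HB). split.
  - apply Lpar.
    + intros x Hx. apply Lpar.
      * intros y Hy. apply Hray; i01.
      * intros l Hl. destruct (HG l Hl) as [Q1 Q2]. destruct (ex_in2 _ M Q1 Q2) as [E _]. apply E; i01.
    + intros l Hl. destruct (HG l Hl) as [Q1 Q2]. destruct (ex_in2 _ M Q1 Q2) as [_ E]. exact E.
  - intros l Hl. destruct (HG l Hl) as [Q1 Q2].
    destruct (L2 _ M 0 1 Q1 Q2 ltac:(lra) ltac:(lra) ltac:(lra)) as [_ B].
    destruct (ex_in2 _ M Q1 Q2) as [_ E].
    eapply Rle_trans. apply RI_bound; [lra|exact E|]. intros x Hx. apply B; auto. lra.
Qed.

Definition S_ F l := (T1 F l + T2 F l + T3 F l) / 3.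

Lemma S_conv F M : conv3 F -> bnd3 F M -> conv1 (S_ F) /\ bnd1 (S_ F) M.
Proof.
  intros HF HB.
  destruct (T2D_conv F M (fun l t r => F l (l * t) (l * r)) HF HB) as [C1 B1].
  { intros x y Hx Hy. apply (conv1_ext (fun l => F (l * 1) (l * x) (l * y))).
    - intros l _. rewrite Rmult_1_r. reflexivity.
    - apply ray; auto; i01. }
  { intros l Hl. split; [apply (conv2_scale (F l)); auto; apply c3_1; auto
                        |apply (bnd2_scale (F l)); auto; apply b3_1; auto]. }
  destruct (T2D_conv F M (fun l s r => F (l * s) l (l * r)) HF HB) as [C2 B2].
  { intros x y Hx Hy. apply (conv1_ext (fun l => F (l * x) (l * 1) (l * y))).
    - intros l _. rewrite Rmult_1_r. reflexivity.
    - apply ray; auto; i01. }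
  { intros l Hl. split; [apply (conv2_scale (fun s r => F s l r)); auto; apply c3_2; auto
                        |apply (bnd2_scale (fun s r => F s l r)); auto; apply b3_2; auto]. }
  destruct (T2D_conv F M (fun l s t => F (l * s) (l * t) l) HF HB) as [C3 B3].
  { intros x y Hx Hy. apply (conv1_ext (fun l => F (l * x) (l * y) (l * 1))).
    - intros l _. rewrite Rmult_1_r. reflexivity.
    - apply ray; auto; i01. }
  { intros l Hl. split; [apply (conv2_scale (fun s t => F s t l)); auto; apply c3_3; auto
                        |apply (bnd2_scale (fun s t => F s t l)); auto; apply b3_3; auto]. }
  split.
  - intros x y l Hx Hy Hl. unfold S_, T1, T2, T3.
    pose proof (C1 x y l Hx Hy Hl). pose proof (C2 x y l Hx Hy Hl). pose proof (C3 x y l Hx Hy Hl).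
    simpl in *. lra.
  - intros x Hx. unfold S_, T1, T2, T3.
    pose proof (B1 x Hx) as P1. pose proof (B2 x Hx) as P2. pose proof (B3 x Hx) as P3. simpl in *.
    apply absle in P1. apply absle in P2. apply absle in P3. apply Rabs_le. split; lra.
Qed.


Lemma subgrad phi c : conv1 phi -> 0 < c < 1 ->
  exists m, forall x, 0 <= x <= 1 -> phi c + m * (x - c) <= phi x.
Proof.
  intros Hc Hc01.
  set (E := fun v => exists x, 0 <= x < c /\ v = (phi c - phi x) * / (c - x)).
  set (U := (phi 1 - phi c) * / (1 - c)).
  assert (slope_le : forall x z, 0 <= x < c -> c < z <= 1 ->
     (phi c - phi x) * / (c - x) <= (phi z - phi c) * / (z - c)).
  { intros x z Hx Hz. pose proof (K3 phi x c z Hc ltac:(lra) ltac:(lra) ltac:(lra) ltac:(lra)) as K.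
    assert (Q : (phi c - phi x) * (z - c) <= (phi z - phi c) * (c - x)) by nra.
    assert (i1 : 0 < / (c - x)) by (apply Rinv_0_lt_compat; lra).
    assert (i2 : 0 < / (z - c)) by (apply Rinv_0_lt_compat; lra).
    apply Rmult_le_compat_l with (r := / (c - x) * / (z - c)) in Q; [|nra].
    replace ((phi c - phi x) * / (c - x)) with (/ (c - x) * / (z - c) * ((phi c - phi x) * (z - c))) by (field; lra).
    replace ((phi z - phi c) * / (z - c)) with (/ (c - x) * / (z - c) * ((phi z - phi c) * (c - x))) by (field; lra).
    exact Q. }
  assert (bE : bound E).
  { exists U. intros v [x [Hx ->]]. apply slope_le; lra. }
  assert (nE : exists v, E v) by (exists ((phi c - phi 0) * / (c - 0)); exists 0; split; [lra|reflexivity]).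
  destruct (completeness E bE nE) as [m [Hm1 Hm2]].
  exists m. intros x Hx.
  destruct (Rtotal_order x c) as [Hlt|[Heq|Hgt]].
  - assert (E ((phi c - phi x) * / (c - x))) by (exists x; split; [lra|reflexivity]).
    pose proof (Hm1 _ H) as H2.
    assert (phi c - phi x = ((phi c - phi x) * / (c - x)) * (c - x)) by (field; lra).
    assert (0 < c - x) by lra. nra.
  - subst. lra.
  - assert (m <= (phi x - phi c) * / (x - c)).
    { apply Hm2. intros v [y [Hy ->]]. apply slope_le; lra. }
    assert (phi x - phi c = ((phi x - phi c) * / (x - c)) * (x - c)) by (field; lra).
    assert (0 < x - c) by lra. nra.
Qed.

Lemma small_nonneg x : (forall e, 0 < e -> x >= - e) -> x >= 0.
Proof. intros H. destruct (Rge_dec x 0); auto. specialize (H (- x / 2) ltac:(lra)). lra. Qed.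

Lemma mono_step (Psi : R -> R) K a b : a < b -> 0 <= K ->
  (forall mu l, a <= mu -> mu <= l -> l <= b -> Psi l - Psi mu >= - (K * (l - mu) ^ 2)) ->
  Psi b - Psi a >= 0.
Proof.
  intros Hab HK H.
  apply small_nonneg. intros e He.
  destruct (archimed (K * (b - a) ^ 2 / e)) as [Ha _].
  set (N := Z.to_nat (up (K * (b - a) ^ 2 / e))).
  assert (HN : K * (b - a) ^ 2 / e < INR N).
  { unfold N. rewrite INR_IZR_INZ. rewrite Z2Nat.id. lra.
    apply le_IZR. assert (0 <= K * (b - a) ^ 2 / e).
    { apply Rmult_le_pos; [apply Rmult_le_pos; [lra|apply pow2_ge_0]|left; apply Rinv_0_lt_compat; lra]. }
    lra. }
  assert (HN0 : (0 < N)%nat).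
  { destruct N. simpl in HN. assert (0 <= K * (b - a) ^ 2 / e).
    { apply Rmult_le_pos; [apply Rmult_le_pos; [lra|apply pow2_ge_0]|left; apply Rinv_0_lt_compat; lra]. }
    lra. lia. }
  set (h := (b - a) / INR N).
  assert (HNpos : 0 < INR N) by (apply lt_0_INR; lia).
  assert (Hh : 0 < h) by (unfold h; apply Rdiv_lt_0_compat; lra).
  assert (Hb : a + INR N * h = b) by (unfold h; field; lra).
  assert (step : forall k, (k <= N)%nat -> Psi (a + INR k * h) - Psi a >= - (INR k * (K * h ^ 2))).
  { induction k as [|k IH]; intros Hk.
    - simpl. replace (a + 0 * h) with a by ring. lra.
    - specialize (IH ltac:(lia)).
      assert (Hk' : INR k + 1 <= INR N).
      { rewrite <- S_INR. apply le_INR. lia. }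
      assert (0 <= INR k) by apply pos_INR.
      pose proof (H (a + INR k * h) (a + INR (S k) * h)) as Hs.
      rewrite S_INR in Hs |- *.
      assert (a + (INR k + 1) * h <= b) by nra.
      specialize (Hs ltac:(nra) ltac:(nra) ltac:(lra)).
      replace (a + (INR k + 1) * h - (a + INR k * h)) with h in Hs by ring. nra. }
  specialize (step N (Nat.le_refl _)). rewrite Hb in step.
  assert (INR N * (K * h ^ 2) = K * (b - a) ^ 2 / INR N) by (unfold h; field; lra).
  assert (K * (b - a) ^ 2 / INR N < e).
  { destruct (Req_dec K 0) as [->|HK0].
    - replace (0 * (b - a) ^ 2 / INR N) with 0 by (field; lra). lra.
    - assert (0 < K * (b - a) ^ 2) by (apply Rmult_lt_0_compat; [lra|]; apply pow_lt; lra).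
      apply Rmult_lt_reg_r with (INR N / e). apply Rdiv_lt_0_compat; lra.
      replace (K * (b - a) ^ 2 / INR N * (INR N / e)) with (K * (b - a) ^ 2 / e) by (field; lra).
      replace (e * (INR N / e)) with (INR N) by (field; lra). lra. }
  lra.
Qed.

Lemma mono_lemma (Psi : R -> R) C :
  (forall mu l, 0 <= mu -> mu <= l -> l <= 1 -> Rabs (Psi l - Psi mu) <= C * (l - mu)) ->
  (forall a b, 0 < a -> a < b -> b < 1 -> exists K, 0 <= K /\
     forall mu l, a <= mu -> mu <= l -> l <= b -> Psi l - Psi mu >= - (K * (l - mu) ^ 2)) ->
  Psi 1 - Psi 0 >= 0.
Proof.
  intros HC Hloc.
  apply small_nonneg. intros e He.
  set (d := Rmin (1/4) (e / (2 * (Rabs C + 1)))).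
  assert (Hd : 0 < d) by (unfold d; apply Rmin_glb_lt; [lra|apply Rdiv_lt_0_compat; [lra|pose proof (Rabs_pos C); lra]]).
  assert (Hd1 : d <= 1/4) by apply Rmin_l.
  assert (Hd2 : d <= e / (2 * (Rabs C + 1))) by apply Rmin_r.
  destruct (Hloc d (1 - d) Hd ltac:(lra) ltac:(lra)) as [K [HK HK2]].
  pose proof (mono_step Psi K d (1 - d) ltac:(lra) HK HK2) as M1.
  pose proof (HC 0 d ltac:(lra) ltac:(lra) ltac:(lra)) as M0.
  pose proof (HC (1 - d) 1 ltac:(lra) ltac:(lra) ltac:(lra)) as M2.
  apply absle in M0. apply absle in M2.
  assert (C * d <= e / 2).
  { apply Rle_trans with ((Rabs C + 1) * d).
    - pose proof (Rle_abs C). nra.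
    - apply Rle_trans with ((Rabs C + 1) * (e / (2 * (Rabs C + 1)))).
      + pose proof (Rabs_pos C). apply Rmult_le_compat_l; lra.
      + pose proof (Rabs_pos C). right. field. lra. }
  replace (1 - (1 - d)) with d in M2 by ring.
  replace (d - 0) with d in M0 by ring.
  lra.
Qed.

Definition pol al be x := al * x ^ 3 + be * x ^ 4.
Definition dpol al be x := 3 * al * x ^ 2 + 4 * be * x ^ 3.

Lemma pol_taylor al be mu l : 0 <= mu <= l -> l <= 1 ->
  Rabs (pol al be l - pol al be mu - (l - mu) * dpol al be l) <= (3 * Rabs al + 6 * Rabs be) * (l - mu) ^ 2.
Proof.
  intros H1 H2. unfold pol, dpol.
  replace (al * l ^ 3 + be * l ^ 4 - (al * mu ^ 3 + be * mu ^ 4) - (l - mu) * (3 * al * l ^ 2 + 4 * be * l ^ 3))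
    with (- ((l - mu) ^ 2 * (al * (mu + 2 * l) + be * (mu ^ 2 + 2 * mu * l + 3 * l ^ 2)))) by ring.
  rewrite Rabs_Ropp, Rabs_mult. rewrite (Rabs_right ((l - mu) ^ 2)) by (apply Rle_ge, pow2_ge_0).
  rewrite Rmult_comm. apply Rmult_le_compat_r; [apply pow2_ge_0|].
  eapply Rle_trans; [apply Rabs_triang|]. rewrite !Rabs_mult.
  rewrite (Rabs_right (mu + 2 * l)) by lra.
  rewrite (Rabs_right (mu ^ 2 + 2 * mu * l + 3 * l ^ 2)) by nra.
  pose proof (Rabs_pos al). pose proof (Rabs_pos be).
  assert (mu + 2 * l <= 3) by lra. assert (mu ^ 2 + 2 * mu * l + 3 * l ^ 2 <= 6) by nra.
  nra.
Qed.

Lemma pol_lip al be mu l : 0 <= mu <= l -> l <= 1 ->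
  Rabs (pol al be l - pol al be mu) <= (3 * Rabs al + 4 * Rabs be) * (l - mu).
Proof.
  intros H1 H2. unfold pol.
  replace (al * l ^ 3 + be * l ^ 4 - (al * mu ^ 3 + be * mu ^ 4))
    with ((l - mu) * (al * (l^2 + l*mu + mu^2) + be * (l^3 + l^2*mu + l*mu^2 + mu^3))) by ring.
  rewrite Rabs_mult. rewrite (Rabs_right (l - mu)) by lra.
  rewrite Rmult_comm. apply Rmult_le_compat_r; [lra|].
  eapply Rle_trans; [apply Rabs_triang|]. rewrite !Rabs_mult.
  rewrite (Rabs_right (l^2 + l*mu + mu^2)) by nra.
  rewrite (Rabs_right (l^3 + l^2*mu + l*mu^2 + mu^3)) by (apply Rle_ge; repeat apply Rplus_le_le_0_compat; try apply pow_le; repeat apply Rmult_le_pos; try apply pow_le; lra).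
  pose proof (Rabs_pos al). pose proof (Rabs_pos be).
  assert (l^2 + l*mu + mu^2 <= 3) by nra.
  assert (l^3 + l^2*mu + l*mu^2 + mu^3 <= 4).
  { assert (l^3 <= 1) by (simpl; nra). assert (l^2*mu <= 1) by (simpl; nra).
    assert (l*mu^2 <= 1) by (simpl; nra). assert (mu^3 <= 1) by (simpl; nra). lra. }
  nra.
Qed.


Lemma Phi0 F : Phi F 0 = 0.
Proof. unfold Phi. rewrite (@RInt_point R_CompleteNormedModule). reflexivity. Qed.

Lemma generic F M (al be : R) (sgn : R) :
  conv3 F -> bnd3 F M -> (sgn = 1 \/ sgn = -1) ->
  (forall l, 0 <= l <= 1 -> sgn * (dpol al be l - Sig F l) >= 0) ->
  sgn * (pol al be 1 - Phi F 1) >= 0.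
Proof.
  intros HF HB Hs Hd.
  assert (HM := bnd3_M F M HB).
  set (Psi := fun l => sgn * (pol al be l - Phi F l)).
  assert (Hsa : Rabs sgn = 1) by (destruct Hs as [->| ->]; [apply Rabs_R1|rewrite Rabs_left by lra; lra]).
  pose proof (mono_lemma Psi ((3 * Rabs al + 4 * Rabs be) + 3 * M)) as ML.
  assert (Psi 1 - Psi 0 >= 0).
  { apply ML.
    - intros mu l H1 H2 H3. unfold Psi.
      replace (sgn * (pol al be l - Phi F l) - sgn * (pol al be mu - Phi F mu))
        with (sgn * ((pol al be l - pol al be mu) - (Phi F l - Phi F mu))) by ring.
      rewrite Rabs_mult, Hsa, Rmult_1_l.
      pose proof (pol_lip al be mu l ltac:(lra) H3) as P1. pose proof (phi_lip F M mu l HF HB H1 H2 H3) as P2.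
      apply absle in P1. apply absle in P2. apply Rabs_le. split; lra.
    - intros a b Ha Hab Hb.
      exists ((3 * Rabs al + 6 * Rabs be) + (3 * LL M a b + 3 * M)). split.
      { pose proof (Rabs_pos al). pose proof (Rabs_pos be). pose proof (LL_pos M a b HM Ha ltac:(lra)). lra. }
      intros mu l H1 H2 H3.
      pose proof (pol_taylor al be mu l ltac:(lra) ltac:(lra)) as P.
      pose proof (shellK F M a b mu l HF HB Ha ltac:(lra) H1 H2 H3) as S.
      pose proof (Hd l ltac:(lra)) as D.
      apply absle in P. apply absle in S.
      assert (0 <= l - mu) by lra.
      unfold Psi.
      replace (sgn * (pol al be l - Phi F l) - sgn * (pol al be mu - Phi F mu))
        with (sgn * ((pol al be l - pol al be mu - (l - mu) * dpol al be l)
               - (Phi F l - Phi F mu - (l - mu) * Sig F l)) + (l - mu) * (sgn * (dpol al be l - Sig F l))) by ring.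
      assert (0 <= (l - mu) * (sgn * (dpol al be l - Sig F l))) by (apply Rmult_le_pos; lra).
      destruct Hs as [-> | ->]; nra. }
  unfold Psi in H. rewrite Phi0 in H. unfold pol in H at 2. simpl in H. lra.
Qed.

Definition U1 (F : R -> R -> R -> R) := RInt (fun t => RInt (fun r => F 1 t r) 0 1) 0 1.
Definition U2 (F : R -> R -> R -> R) := RInt (fun s => RInt (fun r => F s 1 r) 0 1) 0 1.
Definition U3 (F : R -> R -> R -> R) := RInt (fun s => RInt (fun t => F s t 1) 0 1) 0 1.

Theorem main F M : conv3 F -> bnd3 F M ->
  Phi F 1 <= / 4 * F 0 0 0 + 3 / 4 * (/ 3 * (U1 F + U2 F + U3 F)) /\
  S_ F (3/4) <= Phi F 1.
Proof.
  intros HF HB. set (S1 := / 3 * (U1 F + U2 F + U3 F)). split.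
  - pose proof (generic F M (F 0 0 0) (3/4 * (S1 - F 0 0 0)) 1 HF HB (or_introl eq_refl)) as G.
    assert (Hd : forall l, 0 <= l <= 1 -> 1 * (dpol (F 0 0 0) (3/4 * (S1 - F 0 0 0)) l - Sig F l) >= 0).
    { intros l Hl. rewrite (Sig_scale F M l HF HB Hl).
      destruct (T_upper F M l HF HB Hl) as [Q1 [Q2 Q3]].
      unfold dpol. fold (U1 F) in Q1. fold (U2 F) in Q2. fold (U3 F) in Q3.
      assert (0 <= l ^ 2) by apply pow2_ge_0.
      assert (l ^ 2 * (T1 F l + T2 F l + T3 F l) <= l ^ 2 * (l * (U1 F + U2 F + U3 F) + 3 * (1 - l) * F 0 0 0))
        by (apply Rmult_le_compat_l; lra).
      unfold S1. simpl in *. nra. }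
    specialize (G Hd). unfold pol in G. simpl in G. lra.
  - destruct (S_conv F M HF HB) as [SC SB].
    destruct (subgrad (S_ F) (3/4) SC ltac:(lra)) as [m Hm].
    pose proof (generic F M (S_ F (3/4) - m * (3/4)) (3/4 * m) (-1) HF HB (or_intror eq_refl)) as G.
    assert (Hd : forall l, 0 <= l <= 1 -> -1 * (dpol (S_ F (3/4) - m * (3/4)) (3/4 * m) l - Sig F l) >= 0).
    { intros l Hl. rewrite (Sig_scale F M l HF HB Hl).
      pose proof (Hm l Hl) as H. unfold S_ in H.
      unfold dpol. assert (0 <= l ^ 2) by apply pow2_ge_0.
      assert (3 * l ^ 2 * ((T1 F (3/4) + T2 F (3/4) + T3 F (3/4)) / 3 + m * (l - 3/4)) <= 3 * l ^ 2 * ((T1 F l + T2 F l + T3 F l) / 3))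
        by (apply Rmult_le_compat_l; lra).
      unfold S_. simpl in *. nra. }
    specialize (G Hd). unfold pol in G. simpl in G. lra.
Qed.


Lemma cube_lin A a u v w s1 t1 r1 s2 t2 r2 l :
  cube_pt A a u v w (l*s1+(1-l)*s2) (l*t1+(1-l)*t2) (l*r1+(1-l)*r2) =
  padd (pscal l (cube_pt A a u v w s1 t1 r1)) (pscal (1-l) (cube_pt A a u v w s2 t2 r2)).
Proof.
  destruct A, u, v, w. unfold cube_pt, padd, pscal. simpl. f_equal; ring.
Qed.

Lemma cube_hom A a u v w lam s t r :
  homothety A lam (cube_pt A a u v w s t r) = cube_pt A a u v w (lam*s) (lam*t) (lam*r).
Proof.
  destruct A, u, v, w. unfold homothety, cube_pt, padd, pscal, psub. simpl. f_equal; ring.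
Qed.

Lemma cube0 A a u v w : cube_pt A a u v w 0 0 0 = A.
Proof. destruct A, u, v, w. unfold cube_pt, padd, pscal. simpl. f_equal; ring. Qed.

Lemma conv_line F s1 t1 r1 s2 t2 r2 B : conv3 F -> in01 s1 -> in01 t1 -> in01 r1 -> in01 s2 -> in01 t2 -> in01 r2 ->
  F s1 t1 r1 <= B -> F s2 t2 r2 <= B -> forall l, in01 l -> F (l*s1+(1-l)*s2) (l*t1+(1-l)*t2) (l*r1+(1-l)*r2) <= B.
Proof.
  intros HF H1 H2 H3 H4 H5 H6 B1 B2 l Hl.
  eapply Rle_trans. apply HF; auto. unfold in01 in Hl. nra.
Qed.

Lemma bnd_from_conv F : conv3 F -> exists M, bnd3 F M.
Proof.
  intros HF.
  set (B := Rabs (F 0 0 0) + Rabs (F 0 0 1) + Rabs (F 0 1 0) + Rabs (F 0 1 1)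
          + Rabs (F 1 0 0) + Rabs (F 1 0 1) + Rabs (F 1 1 0) + Rabs (F 1 1 1)).
  assert (HV : forall s t r, (s = 0 \/ s = 1) -> (t = 0 \/ t = 1) -> (r = 0 \/ r = 1) -> F s t r <= B).
  { intros s t r Hs Ht Hr. unfold B.
    pose proof (Rle_abs (F 0 0 0)). pose proof (Rle_abs (F 0 0 1)). pose proof (Rle_abs (F 0 1 0)).
    pose proof (Rle_abs (F 0 1 1)). pose proof (Rle_abs (F 1 0 0)). pose proof (Rle_abs (F 1 0 1)).
    pose proof (Rle_abs (F 1 1 0)). pose proof (Rle_abs (F 1 1 1)).
    pose proof (Rabs_pos (F 0 0 0)). pose proof (Rabs_pos (F 0 0 1)). pose proof (Rabs_pos (F 0 1 0)).
    pose proof (Rabs_pos (F 0 1 1)). pose proof (Rabs_pos (F 1 0 0)). pose proof (Rabs_pos (F 1 0 1)).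
    pose proof (Rabs_pos (F 1 1 0)). pose proof (Rabs_pos (F 1 1 1)).
    destruct Hs as [->| ->]; destruct Ht as [->| ->]; destruct Hr as [->| ->]; lra. }
  assert (i0 : in01 0) by i01. assert (i1 : in01 1) by i01.
  assert (Hr : forall s t r, (s = 0 \/ s = 1) -> (t = 0 \/ t = 1) -> in01 r -> F s t r <= B).
  { intros s t r Hs Ht Hrr.
    assert (Hs' : in01 s) by (destruct Hs as [->| ->]; i01).
    assert (Ht' : in01 t) by (destruct Ht as [->| ->]; i01).
    pose proof (conv_line F s t 1 s t 0 B HF Hs' Ht' i1 Hs' Ht' i0 (HV s t 1 Hs Ht (or_intror eq_refl)) (HV s t 0 Hs Ht (or_introl eq_refl)) r Hrr) as K.
    rewrite !same in K. replace (r * 1 + (1 - r) * 0) with r in K by ring. exact K. }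
  assert (Ht : forall s t r, (s = 0 \/ s = 1) -> in01 t -> in01 r -> F s t r <= B).
  { intros s t r Hs Htt Hrr.
    assert (Hs' : in01 s) by (destruct Hs as [->| ->]; i01).
    pose proof (conv_line F s 1 r s 0 r B HF Hs' i1 Hrr Hs' i0 Hrr (Hr s 1 r Hs (or_intror eq_refl) Hrr) (Hr s 0 r Hs (or_introl eq_refl) Hrr) t Htt) as K.
    rewrite !same in K. replace (t * 1 + (1 - t) * 0) with t in K by ring. exact K. }
  assert (Hu : forall s t r, in01 s -> in01 t -> in01 r -> F s t r <= B).
  { intros s t r Hss Htt Hrr.
    pose proof (conv_line F 1 t r 0 t r B HF i1 Htt Hrr i0 Htt Hrr (Ht 1 t r (or_intror eq_refl) Htt Hrr) (Ht 0 t r (or_introl eq_refl) Htt Hrr) s Hss) as K.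
    rewrite !same in K. replace (s * 1 + (1 - s) * 0) with s in K by ring. exact K. }
  exists (B + 2 * Rabs (F (/2) (/2) (/2))).
  intros s t r Hs Ht' Hr'.
  assert (hi : in01 (/2)) by i01.
  pose proof (HF s t r (1-s) (1-t) (1-r) (/2) Hs Ht' Hr' ltac:(i01) ltac:(i01) ltac:(i01) hi) as K.
  replace (/ 2 * s + (1 - / 2) * (1 - s)) with (/2) in K by field.
  replace (/ 2 * t + (1 - / 2) * (1 - t)) with (/2) in K by field.
  replace (/ 2 * r + (1 - / 2) * (1 - r)) with (/2) in K by field.
  pose proof (Hu (1-s) (1-t) (1-r) ltac:(i01) ltac:(i01) ltac:(i01)).
  pose proof (Hu s t r Hs Ht' Hr').
  pose proof (Rle_abs (F (/2) (/2) (/2))). pose proof (Rle_abs (- F (/2) (/2) (/2))). rewrite Rabs_Ropp in H2.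
  apply Rabs_le. split; lra.
Qed.

Theorem theorem8p4 (A : pt3) (a : R) (u v w : pt3) (f : pt3 -> R) :
  0 < a -> orthonormal u v w -> convex_on_cube A a u v w f ->
  avg_cube A a u v w f <= / 4 * f A + 3 / 4 * avg_S A a u v w f /\
  avg_hS A a u v w (3 / 4) f <= avg_cube A a u v w f.
Proof.
  intros Ha Ho Hc.
  set (F := fun s t r => f (cube_pt A a u v w s t r)).
  assert (HF : conv3 F).
  { intros s1 t1 r1 s2 t2 r2 l H1 H2 H3 H4 H5 H6 H7. unfold F. rewrite cube_lin.
    apply Hc; auto.
    - exists s1, t1, r1. unfold in01 in *. repeat split; lra.
    - exists s2, t2, r2. unfold in01 in *. repeat split; lra. }
  destruct (bnd_from_conv F HF) as [M HB].
  destruct (main F M HF HB) as [I1 I2].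
  change (avg_cube A a u v w f) with (Phi F 1).
  change (avg_S A a u v w f) with (/ 3 * (U1 F + U2 F + U3 F)).
  replace (f A) with (F 0 0 0) by (unfold F; rewrite cube0; reflexivity).
  split; [exact I1|].
  replace (avg_hS A a u v w (3 / 4) f) with (S_ F (3/4)); [exact I2|].
  unfold avg_hS, avg_S, S_, T1, T2, T3, F. rewrite Rmult_comm. unfold Rdiv.
  f_equal. f_equal; [f_equal|].
  - f_equal. apply functional_extensionality. intros t. f_equal. apply functional_extensionality. intros r.
    rewrite cube_hom, Rmult_1_r. reflexivity.
  - f_equal. apply functional_extensionality. intros t. f_equal. apply functional_extensionality. intros r.
    rewrite cube_hom, Rmult_1_r. reflexivity.
  - f_equal. apply functional_extensionality. intros t. f_equal. apply functional_extensionality. intros r.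
    rewrite cube_hom, Rmult_1_r. reflexivity.
Qed.
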